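(* Let $S\subseteq M_n$ be a noncommutative graph. Then $\alpha(S)\leq\Theta(S)\leq\mathcal{H}(S)\leq\overline{\xi}(S)$.
   Context: All scalars are complex; $M_{n\times m}$ denotes complex $n\times m$ matrices and $M_n=M_{n\times n}$. A noncommutative graph is a linear subspace $S\subseteq M_n$ that contains $I_n$ and is closed under conjugate transpose. The independence number $\alpha(S)$ is the maximum $\ell$ for which there exist nonzero vectors $\ket{\psi_1},\dots,\ket{\psi_\ell}\in\mathbb{C}^n$ with $\bra{\psi_i}A\ket{\psi_j}=0$ for all distinct $i,j\in[\ell]$ and all $A\in S$. With $S\otimes T=\mathrm{span}\{A\otimes B:A\in S,B\in T\}$ and $S^{\otimes k}$ the $k$-fold tensor power, the Shannon capacity is $\Theta(S)=\sup_k\sqrt[k]{\alpha(S^{\otimes k})}$. For a subspace $S\subseteq M_n$, $M_m(S)$ denotes the set of $m\times m$ block matrices $B=[B_{i,j}]_{i,j\in[m]}$ with every block $B_{i,j}\in S$, viewed as elements of $M_{mn}$. The Haemers bound is $\mathcal{H}(S)=\min\{\mathrm{rk}(B):\ m\in\mathbb{N},\ B\in M_m(S),\ \sum_{i=1}^m B_{i,i}=I_n\}$. A quantum channel $\Phi:M_n\to M_k$ is a map $\Phi(A)=\sum_{i=1}^m E_iAE_i^\dagger$ with $E_i\in M_{k\times n}$ and $\sum_i E_i^\dagger E_i=I_n$; its noncommutative graph is $S_\Phi=\mathrm{span}\{E_i^\dagger E_j: i,j\in[m]\}$. The orthogonal rank is $\overline{\xi}(S)=\min\{k:\ \text{there is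 a quantum channel }\Phi:M_n\to M_k \text{ with } S_\Phi\subseteq S\}$. *)

(* Defs.v *)
From HB Require Import structures.
From mathcomp Require Import all_boot all_order all_algebra.
From mathcomp Require Import classical_sets boolp reals ereal exp.
From mathcomp.real_closed Require Import complex mxtens.

Set Implicit Arguments.
Unset Strict Implicit.
Unset Printing Implicit Defensive.

Import Order.TTheory GRing.Theory Num.Theory.
Local Open Scope ring_scope.
Local Open Scope complex_scope.

Section NCGraph.
Variable R : realType.
Local Notation C := R[i].

Definition ctr {m p : nat} (A : 'M[C]_(m, p)) : 'M[C]_(p, m) :=
  (map_mx (@conjc R) A)^T.

Definition nc_graph {n : nat} (S : {vspace 'M[C]_n}) : Prop :=
  (1%:M \in S) /\ (forall A, A \in S -> ctr A \in S).

(** S (x) T = span { A (x) B : A in S, B in T } (spanned by basis tensors) *)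
Definition tens_vs {n p : nat} (S : {vspace 'M[C]_n}) (T : {vspace 'M[C]_p})
  : {vspace 'M[C]_(n * p)} :=
  <<[seq A *t B | A <- vbasis S, B <- vbasis T]>>%VS.

(** tpow S k = S^{(x)(k+1)}, the (k+1)-fold tensor power, in M_(n^(k+1)) *)
Fixpoint tpow {n : nat} (S : {vspace 'M[C]_n}) (k : nat)
  : {vspace 'M[C]_(n ^ k.+1)} :=
  if k is k'.+1 then tens_vs S (tpow S k') else S.

Definition indep_family {n : nat} (S : {vspace 'M[C]_n}) (l : nat) : Prop :=
  exists psi : 'I_l -> 'cV[C]_n,
    (forall i, psi i != 0) /\
    (forall i j, i != j -> forall A, A \in S -> ctr (psi i) *m A *m psi j = 0).

Local Open Scope ereal_scope.

(** independence number (maximum, expressed as a supremum in \bar R) *)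
Definition alpha {n : nat} (S : {vspace 'M[C]_n}) : \bar R :=
  ereal_sup [set (l%:R)%:E | l in [set l | indep_family S l]].

(** Shannon capacity: sup_{k >= 1} alpha(S^{(x)k})^{1/k} *)
Definition shannon_cap {n : nat} (S : {vspace 'M[C]_n}) : \bar R :=
  ereal_sup [set poweR (alpha (tpow S k)) (k.+1%:R^-1)%R | k in [set: nat]].

Definition haemers_feasible {n : nat} (S : {vspace 'M[C]_n}) (r : nat) : Prop :=
  exists (m : nat) (B : 'I_m -> 'I_m -> 'M[C]_n),
    (forall i j, B i j \in S) /\
    (\sum_(i < m) B i i = 1%:M)%R /\
    \rank (\mxblock_(i < m, j < m) B i j) = r.

(** Haemers bound (minimum, expressed as an infimum in \bar R) *)
Definition haemers {n : nat} (S : {vspace 'M[C]_n}) : \bar R :=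
  ereal_inf [set (r%:R)%:E | r in [set r | haemers_feasible S r]].

Definition kraus_tp {n k m : nat} (E : 'I_m -> 'M[C]_(k, n)) : Prop :=
  (\sum_(i < m) ctr (E i) *m E i = 1%:M)%R.

Definition channel_graph {n k m : nat} (E : 'I_m -> 'M[C]_(k, n))
  : {vspace 'M[C]_n} :=
  <<[seq ctr (E i) *m E j | i <- enum 'I_m, j <- enum 'I_m]>>%VS.

(** orthogonal rank (minimum, expressed as an infimum in \bar R) *)
Definition orth_rank {n : nat} (S : {vspace 'M[C]_n}) : \bar R :=
  ereal_inf [set (k%:R)%:E | k in
    [set k | exists (m : nat) (E : 'I_m -> 'M[C]_(k, n)),
               kraus_tp E /\ (channel_graph E <= S)%VS]].

End NCGraph.

(* Main.v *)
Require Import Defs.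
From HB Require Import structures.
From mathcomp Require Import all_boot all_order all_algebra.
From mathcomp Require Import classical_sets boolp reals ereal exp.
From mathcomp.real_closed Require Import complex mxtens.
Set Implicit Arguments.
Unset Strict Implicit.
Unset Printing Implicit Defensive.
Import Order.TTheory GRing.Theory Num.Theory.
Local Open Scope ring_scope.

Section Blk.
Variable F : fieldType.

Lemma rank_mxblock_fact (m n k : nat) (U : 'I_m -> 'M[F]_(n, k)) (V : 'I_m -> 'M[F]_(k, n)) :
  (\rank (\mxblock_(i < m, j < m) (U i *m V j)) <= k)%N.
Proof.
rewrite -mul_mxcol_mxrow; apply: leq_trans (mxrankM_maxl _ _) _.
exact: rank_leq_col.
Qed.

Lemma mxblock_fact (m n : nat) (B : 'I_m -> 'I_m -> 'M[F]_n) :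
  exists (U : 'I_m -> 'M[F]_(n, \rank (\mxblock_(i < m, j < m) B i j)))
         (V : 'I_m -> 'M[F]_(\rank (\mxblock_(i < m, j < m) B i j), n)),
  forall i j, B i j = U i *m V j.
Proof.
set M := \mxblock_(i < m, j < m) B i j.
exists (fun i => submxcol (col_base M) i), (fun j => submxrow (row_base M) j).
move=> i j.
have : M = \mxcol_i (submxcol (col_base M) i) *m \mxrow_j (submxrow (row_base M) j).
  by rewrite submxcolK submxrowK mulmx_base.
rewrite mul_mxcol_mxrow => /(congr1 (fun X => submxblock X i j)).
by rewrite !mxblockK.
Qed.
End Blk.

Section Tens.
Variable F : fieldType.

Lemma tensmx_suml (k m n p q : nat) (c : 'I_k -> F) (X : 'I_k -> 'M[F]_(m, n)) (Y : 'M[F]_(p, q)) :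
  (\sum_i c i *: X i) *t Y = \sum_i c i *: (X i *t Y).
Proof.
apply/matrixP => a b; rewrite !mxE !summxE mulr_suml; apply: eq_bigr => i _.
by rewrite !mxE mulrA.
Qed.

Lemma tensmx_sumr (k m n p q : nat) (c : 'I_k -> F) (X : 'M[F]_(m, n)) (Y : 'I_k -> 'M[F]_(p, q)) :
  X *t (\sum_i c i *: Y i) = \sum_i c i *: (X *t Y i).
Proof.
apply/matrixP => a b; rewrite !mxE !summxE mulr_sumr; apply: eq_bigr => i _.
by rewrite !mxE mulrCA.
Qed.

Lemma tensmx_suml' (I : finType) (m n p q : nat) (X : I -> 'M[F]_(m, n)) (Y : 'M[F]_(p, q)) :
  (\sum_i X i) *t Y = \sum_i (X i *t Y).
Proof.
apply/matrixP => a b; rewrite !mxE !summxE mulr_suml; apply: eq_bigr => i _.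
by rewrite !mxE.
Qed.

Lemma tensmx_sumr' (I : finType) (m n p q : nat) (X : 'M[F]_(m, n)) (Y : I -> 'M[F]_(p, q)) :
  X *t (\sum_i Y i) = \sum_i (X *t Y i).
Proof.
apply/matrixP => a b; rewrite !mxE !summxE mulr_sumr; apply: eq_bigr => i _.
by rewrite !mxE.
Qed.

Lemma tensmx11 (m p : nat) : (1%:M : 'M[F]_m) *t (1%:M : 'M[F]_p) = 1%:M.
Proof.
apply/matrixP => a b.
case: (mxtens_indexP a) => i j; case: (mxtens_indexP b) => k l.
rewrite tensmxE !mxE -natrM mulnb; congr (_%:R); congr nat_of_bool.
apply/idP/idP.
  by case/andP => /eqP -> /eqP ->.
by move/eqP/(congr1 (@mxtens_unindex m p)); rewrite !mxtens_indexK => -[-> ->]; rewrite !eqxx.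
Qed.

End Tens.
Section C.
Variable R : realType.
Local Notation C := R[i].
Lemma tens_mem (n p : nat) (S : {vspace 'M[C]_n}) (T : {vspace 'M[C]_p}) A B :
  A \in S -> B \in T -> A *t B \in tens_vs S T.
Proof.
move=> AS BT; rewrite (coord_vbasis AS) tensmx_suml; apply: memv_suml => i _.
apply: memvZ; rewrite (coord_vbasis BT) tensmx_sumr; apply: memv_suml => j _.
apply: memvZ; apply: memv_span. apply: (allpairs_f (fun A B => A *t B)); by rewrite mem_nth // size_tuple.
Qed.

Lemma haemers_tens n p (S : {vspace 'M[C]_n}) (T : {vspace 'M[C]_p}) r r' :
  haemers_feasible S r -> haemers_feasible T r' ->
  exists r'', haemers_feasible (tens_vs S T) r'' /\ (r'' <= r * r')%N.
Proof.
case=> m [B [BS [Bsum <-]]]; case=> m' [B' [BS' [Bsum' <-]]].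
have [U [V UV]] := mxblock_fact B.
have [U' [V' UV']] := mxblock_fact B'.
pose B2 := fun i j : 'I_(m * m') =>
  B (mxtens_unindex i).1 (mxtens_unindex j).1 *t B' (mxtens_unindex i).2 (mxtens_unindex j).2.
exists (\rank (\mxblock_(i < m * m', j < m * m') B2 i j)); split.
  exists (m * m')%N, B2; split; [|split] => //.
    by move=> i j; apply: tens_mem.
  rewrite (reindex (@mxtens_index m m')) /=; last first.
    by exists (@mxtens_unindex m m') => x _; rewrite ?mxtens_indexK ?mxtens_unindexK.
  rewrite /B2.
  under eq_bigr do rewrite mxtens_indexK /=.
  rewrite -(pair_big xpredT xpredT (fun a a' => B a a *t B' a' a')) /=.
  under eq_bigr do rewrite -tensmx_sumr'.
  by rewrite -tensmx_suml' Bsum Bsum' tensmx11.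
have -> : \mxblock_(i < m * m', j < m * m') B2 i j =
  \mxblock_(i < m * m', j < m * m')
     ((U (mxtens_unindex i).1 *t U' (mxtens_unindex i).2) *m
      (V (mxtens_unindex j).1 *t V' (mxtens_unindex j).2)).
  by apply: eq_mxblock => i j; rewrite /B2 tensmx_mul -UV -UV'.
exact: rank_mxblock_fact.
Qed.
Lemma norm_nz n (v : 'cV[C]_n) : v != 0 -> (ctr v *m v) 0 0 != 0.
Proof.
move=> vnz; apply: contra vnz => /eqP H; apply/eqP/matrixP => k z.
rewrite [z]ord1 mxE.
have : \sum_k `|v k 0| ^+ 2 = 0.
  rewrite -{}[RHS]H mxE;  apply: eq_bigr => k' _.
  by rewrite sqr_normc !mxE mulrC.
move/psumr_eq0P => /(_ (fun _ _ => exprn_ge0 2 (normr_ge0 _)) k isT).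
by move/eqP; rewrite sqrf_eq0 normr_eq0 => /eqP.
Qed.

Lemma entry3 l n (P : 'M[C]_(l, n)) (M : 'M[C]_n) (Q : 'M[C]_(n, l)) i j :
  (P *m M *m Q) i j = (row i P *m M *m col j Q) 0 0.
Proof.
rewrite !mxE; apply: eq_bigr => k _; rewrite !mxE; congr (_ * _).
by apply: eq_bigr => k' _; rewrite !mxE.
Qed.

Lemma sum_delta m (x : 'I_m) (f : 'I_m -> C) : \sum_a (a == x)%:R * f a = f x.
Proof.
rewrite (bigD1 x) //= eqxx mul1r big1 ?addr0 // => a /negbTE ->; exact: mul0r.
Qed.

Lemma alpha_le_haemers n (S : {vspace 'M[C]_n}) l r :
  indep_family S l -> haemers_feasible S r -> (l <= r)%N.
Proof.
case=> psi [psinz psiind]; case=> m [B [BS [Bsum <-]]].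
have ex : forall i, exists a, (ctr (psi i) *m B a a *m psi i) 0 0 != 0.
  move=> i; apply/not_existsP => H; move: (norm_nz (psinz i)); apply/negP; rewrite negbK.
  have -> : ctr (psi i) *m psi i = ctr (psi i) *m (\sum_a B a a) *m psi i by rewrite Bsum mulmx1.
  rewrite mulmx_sumr mulmx_suml summxE.
  apply/eqP/big1 => a _; apply/eqP/negPn/negP => Ha; exact: H a Ha.
have [af afP] := choice ex.
pose Psi : 'M[C]_(l, n) := \matrix_(i, k) ctr (psi i) 0 k.
pose Q : 'M[C]_(n, l) := \matrix_(k, j) psi j k 0.
pose D a : 'rV[C]_l := \row_i (a == af i)%:R.
pose X := \mxrow_(a < m) (diag_mx (D a) *m Psi).
pose Y := \mxcol_(b < m) (Q *m diag_mx (D b)).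
pose Bl := \mxblock_(i < m, j < m) B i j.
pose g := \row_i (ctr (psi i) *m B (af i) (af i) *m psi i) 0 0.
have HG : X *m Bl *m Y = diag_mx g.
  rewrite /X /Bl /Y mul_mxrow_mxblock mul_mxrow_mxcol.
  apply/matrixP => i j; rewrite summxE.
  under eq_bigr => b _ do rewrite mulmx_suml summxE.
  have E : forall a b, ((diag_mx (D a) *m Psi) *m B a b *m (Q *m diag_mx (D b))) i j =
    (a == af i)%:R * ((ctr (psi i) *m B a b *m psi j) 0 0 * (b == af j)%:R).
    move=> a b.
    have -> : (diag_mx (D a) *m Psi) *m B a b *m (Q *m diag_mx (D b)) =
      diag_mx (D a) *m (Psi *m B a b *m Q) *m diag_mx (D b) by rewrite !mulmxA.
    have rP : row i Psi = ctr (psi i) by apply/matrixP => x y; rewrite !mxE [x]ord1.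
    have cQ : col j Q = psi j by apply/matrixP => x y; rewrite !mxE [y]ord1.
    by rewrite mul_mx_diag mxE mul_diag_mx mxE entry3 rP cQ [D a 0 i]mxE [D b 0 j]mxE mulrA.
  under eq_bigr => b _ do under eq_bigr => a _ do rewrite E.
  under eq_bigr => b _ do rewrite sum_delta mulrC.
  rewrite sum_delta !mxE.
  case: eqVneq => [<-|ij]; first by rewrite mulr1n.
  rewrite mulr0n; move: (psiind _ _ ij _ (BS (af i) (af j))) => /matrixP/(_ 0 0); by rewrite !mxE => ->.
have : (l <= \rank (X *m Bl *m Y))%N.
  rewrite HG mxrank_unit // unitmxE det_diag unitfE; apply/prodf_neq0 => i _.
  by rewrite mxE; apply: afP.
move/leq_trans; apply; apply: leq_trans (mxrankM_maxl _ _) _.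
exact: mxrankM_maxr.
Qed.

Lemma channel_feasible n (S : {vspace 'M[C]_n}) k m (E : 'I_m -> 'M[C]_(k, n)) :
  kraus_tp E -> (channel_graph E <= S)%VS ->
  exists r, haemers_feasible S r /\ (r <= k)%N.
Proof.
move=> HE Hsub.
exists (\rank (\mxblock_(i < m, j < m) (ctr (E i) *m E j))); split.
  exists m, (fun i j => ctr (E i) *m E j); split; [|split] => //.
  move=> i j; apply: (subvP Hsub); apply: memv_span.
  by apply: (allpairs_f (fun i j => ctr (E i) *m E j)); rewrite mem_enum.
exact: rank_mxblock_fact.
Qed.

Lemma tpow_feasible n (S : {vspace 'M[C]_n}) r :
  haemers_feasible S r -> forall k, exists r', haemers_feasible (tpow S k) r' /\ (r' <= r ^ k.+1)%N.
Proof.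
move=> Hr; elim=> [|k [r' [Hr' le']]].
  by exists r; split => //; rewrite expn1.
have [r'' [H'' le'']] := haemers_tens Hr Hr'.
exists r''; split; first exact: H''.
apply: (leq_trans le''); rewrite expnS leq_mul2l le' orbT //.
Qed.

Lemma indep0 n (S : {vspace 'M[C]_n}) : indep_family S 0.
Proof. by exists (fun _ => 0); split => [[]|[]]. Qed.

Local Open Scope ereal_scope.

Lemma alpha_ge0 n (S : {vspace 'M[C]_n}) : 0 <= alpha S.
Proof.
apply: (le_trans _ (ereal_sup_ubound _)); last by exists 0%N; [exact: indep0|].
by [].
Qed.

Lemma alpha_le n (S : {vspace 'M[C]_n}) r : haemers_feasible S r -> alpha S <= (r%:R)%:E.
Proof.
move=> Hr; apply: ge_ereal_sup => _ [l Hl <-].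
by rewrite lee_fin ler_nat; apply: alpha_le_haemers Hl Hr.
Qed.

End C.

Local Open Scope ereal_scope.

Theorem mainTheorem3 (R : realType) (n : nat) (S : {vspace 'M[R[i]]_n}) :
  nc_graph S ->
  alpha S <= shannon_cap S /\ shannon_cap S <= haemers S /\ haemers S <= orth_rank S.
Proof.
move=> _; split; [|split].
- apply: (le_trans _ (ereal_sup_ubound _)); last by exists 0%N.
  have -> : ((0.+1)%:R^-1 : R)%R = 1%R by rewrite invr1.
  by rewrite poweRe1 // alpha_ge0.
- apply: le_ereal_inf_tmp => _ [r Hr <-].
  apply: ge_ereal_sup => _ [k _ <-].
  have [r' [Hr' le']] := tpow_feasible Hr k.
  have := alpha_le Hr'; have := alpha_ge0 (tpow S k).
  case: (alpha (tpow S k)) => [a| |] //=; rewrite !lee_fin => a0 ar.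

  have -> : (r%:R = ((r ^ k.+1)%:R) `^ ((k.+1)%:R^-1) :> R)%R.
    rewrite natrX -powR_mulrn // -powRrM mulfV // powRr1 //.
  apply: ge0_ler_powR; rewrite ?invr_ge0 ?nnegrE //.
  by apply: (le_trans ar); rewrite ler_nat.
- apply: le_ereal_inf_tmp => _ [k [m [E [HE Hsub]]] <-].
  have [r [Hr le]] := channel_feasible HE Hsub.
  apply: (le_trans (ereal_inf_lbound _)); first by exists r.
  by rewrite lee_fin ler_nat.
Qed.
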